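(* Let $\ell=2$ and assume $\mathcal R$ has a set cover. Let $S$ be a set cover of $\tilde{\mathcal R}_2$ with $|S|=k$. Then the set $C=\{\tau_{i,j}:\hat r_{i,j}\in S\}\subseteq\mathbb X^d_2$ has at most $k$ elements and satisfies $\phi(P,C)\le6\Delta$.
   Context: Let $d\ge1$. A polygonal curve $P:[0,1]\to\mathbb R^d$ is obtained by linearly interpolating a sequence of vertices. For $0\le a\le b\le1$, $P[a,b]$ is the subcurve from $P(a)$ to $P(b)$. $\mathbb X^d_\ell=(\mathbb R^d)^\ell$ is the set of polygonal curves in $\mathbb R^d$ with $\ell$ vertices. The Fréchet distance is $d_F(P,Q)=\inf_\gamma\sup_{t\in[0,1]}\|P(\gamma(t))-Q(t)\|$, $\gamma$ over increasing homeomorphisms of $[0,1]$. $P$ has breakpoint parameters $0=t_1<\dots<t_m=1$, and $\Delta>0$ is fixed. The set system $\mathcal R$ (for $\ell=2$) has ground set $Z=\{1,\dots,m-1\}$ and sets $r_Q=\{z\in Z:\exists\, i\le z<j \text{ with } d_F(Q,P[t_i,t_j])\le\Delta\}$, $Q\in\mathbb X^d_2$. A set cover is a subfamily whose union is the ground set. For finite $C\subset\mathbb X^d_\ell$, $\phi(P,C)=\min_I\max_{(i,j)\in I}\min_{q\in C}d_F(P[t_i,t_j],q)$, where $I$ ranges over sets of pairs $(i,j)$ with $1\le i<j\le m$ and $\bigcup_{(i,j)\in I}[t_i,t_j]=[0,1]$. For $1\le a\le b\le m$, $\tau_{a,b}$ is the segment from $P(t_a)$ to $P(t_b)$; $\pi(s_1,\dots,s_r)$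 is the polygonal curve with vertices $P(t_{s_1}),\dots,P(t_{s_r})$. For $z\in Z$, $x_z$ is the smallest integer $x'\in\{1,\dots,z\}$ such that $d_F(\tau_{x,z},P[t_x,t_z])\le4\Delta$ for every integer $x\in[x',z]$, and $y_z$ is the largest integer $y'\in\{z+1,\dots,m\}$ such that $d_F(\tau_{z+1,y},P[t_{z+1},t_y])\le4\Delta$ for every integer $y\in[z+1,y']$. The set system $\tilde{\mathcal R}_2$ has ground set $Z$ and sets $\hat r_{i,j}=\{z\in Z:\exists \text{ integers } x\in[x_z,z],\ y\in[z+1,y_z] \text{ with } d_F(\pi(x,z,z+1,y),\tau_{i,j})\le2\Delta\}$ for $1\le i\le j\le m$. *)

(* Defs.v *)
From HB Require Import structures.
From mathcomp Require Import all_boot all_order all_algebra finmap.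
From mathcomp Require Import all_classical all_reals all_analysis.
Set Implicit Arguments. Unset Strict Implicit. Unset Printing Implicit Defensive.
Import Order.TTheory GRing.Theory Num.Theory.
Import numFieldNormedType.Exports.
Local Open Scope classical_set_scope.
Local Open Scope ring_scope.

Section Frechet.
Variable R : realType.
Variable d : nat.

Definition pt := 'rV[R]_d.

Definition enorm (x : pt) : R := Num.sqrt (\sum_(i < d) (x ord0 i) ^+ 2).

(* a curve is a map [0,1] -> R^d (values outside [0,1] are irrelevant) *)
Definition curve := R -> pt.

Definition I01 : set R := [set x : R | 0 <= x <= 1].

Definition homeo01 (g : R -> R) : Prop :=
  {within I01, continuous g} /\ g 0 = 0 /\ g 1 = 1 /\
  (forall x y, I01 x -> I01 y -> x < y -> g x < g y).

Definition frechet (P Q : curve) : R :=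
  inf [set sup [set enorm (P (gam x) - Q x) | x in I01] | gam in homeo01].

Definition subcurve (P : curve) (a b : R) : curve := fun s => P (a + s * (b - a)).

(* polygonal curve with vertices v 1, ..., v n placed at parameters
   s 1 < ... < s n (1-based indices); linear interpolation in between *)
Definition polyc (n : nat) (s : nat -> R) (v : nat -> pt) : curve := fun x =>
  let i := maxn 1 (\max_(1 <= i < n | (s i <= x)%R) i)%N in
  v i + ((x - s i) / (s i.+1 - s i)) *: (v i.+1 - v i).

Definition polyu (vs : seq pt) : curve :=
  polyc (size vs) (fun i => (i%:R - 1) / ((size vs)%:R - 1)) (fun i => nth 0 vs i.-1).

Definition seg (a b : pt) : curve := polyu [:: a; b].

(* Data of the input curve P: m breakpoints t 1 < ... < t m, vertices p i = P(t i). *)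
Variables (m : nat) (t : nat -> R) (p : nat -> pt) (Delta : R).

Definition Pc : curve := polyc m t p.

Definition tau (a b : nat) : curve := seg (Pc (t a)) (Pc (t b)).

Definition pi4 (s1 s2 s3 s4 : nat) : curve :=
  polyu [:: Pc (t s1); Pc (t s2); Pc (t s3); Pc (t s4)].

Definition Zg : set nat := [set z | (1 <= z < m)%N].

Definition rQ (Q : pt * pt) : set nat :=
  [set z | Zg z /\ exists i j : nat, (1 <= i <= z)%N /\ (z < j <= m)%N /\
       frechet (seg Q.1 Q.2) (subcurve Pc (t i) (t j)) <= Delta].

Definition R_has_set_cover : Prop :=
  exists F : set (pt * pt), \bigcup_(Q in F) rQ Q = Zg.

(* x_z : smallest x' in {1..z} with d_F(tau_{x,z}, P[t_x,t_z]) <= 4 Delta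
   for all integers x in [x', z] (well defined since x' = z qualifies) *)
Definition xgood (z x' : nat) : bool :=
  all (fun x => frechet (tau x z) (subcurve Pc (t x) (t z)) <= 4 * Delta)
      (index_iota x' z.+1).
Definition xz (z : nat) : nat := (\big[minn/z]_(1 <= x' < z.+1 | xgood z x') x')%N.

Definition ygood (z y' : nat) : bool :=
  all (fun y => frechet (tau z.+1 y) (subcurve Pc (t z.+1) (t y)) <= 4 * Delta)
      (index_iota z.+1 y'.+1).
Definition yz (z : nat) : nat := (\big[maxn/z.+1]_(z.+1 <= y' < m.+1 | ygood z y') y')%N.

Definition rhat (i j : nat) : set nat :=
  [set z | Zg z /\ exists x y : nat, (xz z <= x <= z)%N /\ (z.+1 <= y <= yz z)%N /\
       frechet (pi4 x z z.+1 y) (tau i j) <= 2 * Delta].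

Definition validI (I : {set 'I_m.+1 * 'I_m.+1}) : Prop :=
  (forall ij, ij \in I -> (1 <= ij.1 < ij.2)%N) /\
  (forall x : R, (exists2 ij, ij \in I & t ij.1 <= x <= t ij.2) <-> I01 x).

(* phi(P, C) (as an extended real; min over an empty C would be +oo) *)
Definition phi (C : {fset pt * pt}) : \bar R :=
  \big[Order.min/+oo%E]_(I : {set 'I_m.+1 * 'I_m.+1} | `[< validI I >])
    \big[Order.max/-oo%E]_(ij in I)
      \big[Order.min/+oo%E]_(q <- C)
        (frechet (subcurve Pc (t ij.1) (t ij.2)) (seg q.1 q.2))%:E.

End Frechet.

(* Main.v *)
Require Import Defs.
From HB Require Import structures.
From mathcomp Require Import all_boot all_order all_algebra finmap.
From mathcomp Require Import all_classical all_reals all_analysis.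
From mathcomp Require Import ring lra.
Set Implicit Arguments. Unset Strict Implicit. Unset Printing Implicit Defensive.
Import Order.TTheory GRing.Theory Num.Theory.
Import numFieldNormedType.Exports.
Local Open Scope classical_set_scope.
Local Open Scope ring_scope.

Section En.
Variable R : realType.
Variable d : nat.
Local Notation en := (@enorm R d).

Lemma enorm_ge0 (x : pt R d) : 0 <= en x.
Proof. exact: sqrtr_ge0. Qed.

Lemma sumsq_ge0 (x : pt R d) : 0 <= \sum_(i < d) (x ord0 i) ^+ 2.
Proof. by apply: sumr_ge0 => i _; exact: sqr_ge0. Qed.

Lemma enorm_sq (x : pt R d) : en x ^+ 2 = \sum_(i < d) (x ord0 i) ^+ 2.
Proof. by rewrite sqr_sqrtr // sumsq_ge0. Qed.

Lemma CS (a b : pt R d) :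
  (\sum_(i < d) a ord0 i * b ord0 i) ^+ 2 <=
  (\sum_(i < d) a ord0 i ^+ 2) * (\sum_(i < d) b ord0 i ^+ 2).
Proof.
set A := \sum_(i < d) a ord0 i ^+ 2; set B := \sum_(i < d) b ord0 i ^+ 2.
set C := \sum_(i < d) a ord0 i * b ord0 i.
have expand : forall l : R, \sum_(i < d) (l * a ord0 i + b ord0 i) ^+ 2 =
   l ^+ 2 * A + 2 * l * C + B.
  move=> l; rewrite /A /B /C !mulr_sumr -!big_split /=.
  by apply: eq_bigr => i _; ring.
have hA : 0 <= A by apply: sumr_ge0 => i _; exact: sqr_ge0.
have [A0|Apos] := eqVneq A 0.
  have a0 : forall i, a ord0 i = 0.
    move=> i; apply/eqP; rewrite -sqrf_eq0; apply/eqP.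
    move: A0; rewrite /A => /eqP; rewrite psumr_eq0; last by move=> j _; exact: sqr_ge0.
    by move=> /allP /(_ i (mem_index_enum _)) /implyP /(_ isT) /eqP.
  have -> : C = 0 by rewrite /C big1 // => i _; rewrite a0 mul0r.
  by rewrite expr0n /= mulr_ge0 // sumr_ge0 // => i _; exact: sqr_ge0.
have Ap : 0 < A by rewrite lt_def Apos hA.
have := expand (- C / A).
have h0 : 0 <= \sum_(i < d) (- C / A * a ord0 i + b ord0 i) ^+ 2.
  by apply: sumr_ge0 => i _; exact: sqr_ge0.
move=> e; rewrite e in h0.
have : 0 <= A * ((- C / A) ^+ 2 * A + 2 * (- C / A) * C + B).
  by rewrite mulr_ge0 // ltW.
have -> : A * ((- C / A) ^+ 2 * A + 2 * (- C / A) * C + B) = A * B - C ^+ 2.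
  by field; rewrite Apos.
by rewrite subr_ge0.
Qed.

Lemma enorm_triangle (a b : pt R d) : en (a + b) <= en a + en b.
Proof.
rewrite -(ler_pXn2r (n:=2)) // ?nnegrE ?addr_ge0 ?enorm_ge0 //.
rewrite enorm_sq sqrrD !enorm_sq.
have -> : \sum_(i < d) (a + b) ord0 i ^+ 2 =
  \sum_(i < d) a ord0 i ^+ 2 + 2 * \sum_(i < d) a ord0 i * b ord0 i
  + \sum_(i < d) b ord0 i ^+ 2.
  rewrite mulr_sumr -!big_split /=; apply: eq_bigr => i _; rewrite !mxE; ring.
rewrite mulr2n -!addrA lerD2l !addrA lerD2r -mulr2n mulr_natl lerMn2r /=.
have h := CS a b.
apply: le_trans (ler_norm _) _.
rewrite -ler_sqr ?nnegrE ?normr_ge0 ?mulr_ge0 ?enorm_ge0 //.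
by rewrite -normrX ger0_norm ?sqr_ge0 // exprMn !enorm_sq.
Qed.

Lemma enormZ (c : R) (x : pt R d) : en (c *: x) = `|c| * en x.
Proof.
rewrite /enorm.
have -> : \sum_(i < d) (c *: x) ord0 i ^+ 2 = c ^+ 2 * \sum_(i < d) x ord0 i ^+ 2.
  by rewrite mulr_sumr; apply: eq_bigr => i _; rewrite !mxE exprMn.
by rewrite sqrtrM ?sqr_ge0 // sqrtr_sqr.
Qed.

Lemma enormN (x : pt R d) : en (- x) = en x.
Proof. by rewrite -scaleN1r enormZ normrN normr1 mul1r. Qed.

Lemma enorm0 : en 0 = 0.
Proof. by rewrite -(scale0r (0 : pt R d)) enormZ normr0 mul0r. Qed.

Lemma enormB (a b : pt R d) : en (a - b) = en (b - a).
Proof. by rewrite -enormN opprB. Qed.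

Lemma enorm_tri3 (a b c : pt R d) : en (a - c) <= en (a - b) + en (b - c).
Proof. by have := enorm_triangle (a - b) (b - c); rewrite addrA subrK. Qed.
End En.

Section Poly.
Variable R : realType.
Variable d : nat.
Local Notation en := (@enorm R d).
Variables (n : nat) (s : nat -> R) (v : nat -> pt R d).
Hypothesis n2 : (2 <= n)%N.
Hypothesis sinc : forall i, (1 <= i < n)%N -> s i < s i.+1.

Lemma s_lt i j : (1 <= i)%N -> (i < j)%N -> (j <= n)%N -> s i < s j.
Proof.
move=> i1; elim: j => // j IH ij jn.
have jn' : (j < n)%N by [].
move: ij; rewrite ltnS leq_eqVlt => /orP[/eqP eij|ij]; first by rewrite eij in i1 *; apply: sinc; rewrite i1 jn'.
apply: lt_trans (IH ij (ltnW jn)) _; apply: sinc; rewrite jn' andbT.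
exact: leq_trans i1 (ltnW ij).
Qed.

Lemma s_le i j : (1 <= i)%N -> (i <= j)%N -> (j <= n)%N -> s i <= s j.
Proof.
move=> i1 ij jn; case: (ltngtP i j) ij => // [ij _|-> _]; last exact: lexx.
exact/ltW/s_lt.
Qed.

Definition idx (x : R) := maxn 1 (\max_(1 <= i < n | (s i <= x)%R) i)%N.

Lemma idx_spec x : s 1 <= x -> x <= s n ->
  [/\ (1 <= idx x < n)%N, s (idx x) <= x & x <= s (idx x).+1].
Proof.
move=> h1 hn.
set M := (\max_(1 <= i < n | (s i <= x)%R) i)%N.
have HM : M = 0%N \/ ((1 <= M < n)%N /\ s M <= x).
  rewrite /M big_seq_cond; apply: (big_rec (fun M => M = 0%N \/ ((1 <= M < n)%N /\ s M <= x))).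
    by left.
  move=> i y /andP[]; rewrite mem_index_iota => hi hsi [->|[hy1 hy2]].
    by rewrite maxn0; right.
  by rewrite /maxn; case: ifP => _; right.
have M1 : (1 <= M)%N.
  rewrite /M; apply: (@leq_trans 1%N) => //.
  by apply: (@leq_bigmax_seq _ _ _ (fun i => i) 1%N) => //; rewrite mem_index_iota.
have [/andP[MA MB] MC] : ((1 <= M < n)%N /\ s M <= x).
  by case: HM => // M0; rewrite M0 in M1.
have idxM : idx x = M by rewrite /idx (maxn_idPr M1).
rewrite idxM; split => //; first by rewrite MA.
case: (ltnP M.+1 n) => hM.
  rewrite leNgt; apply/negP => hlt.
  have : (M.+1 <= M)%N.
    rewrite /M; apply: (@leq_bigmax_seq _ _ _ (fun i => i) M.+1) => //.
      by rewrite mem_index_iota hM.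
    exact: ltW.
  by rewrite ltnn.
by have -> : M.+1 = n by apply/eqP; rewrite eqn_leq hM MB.
Qed.

Lemma polyc_at i x : (1 <= i < n)%N -> s i <= x -> x <= s i.+1 ->
  polyc n s v x = v i + ((x - s i) / (s i.+1 - s i)) *: (v i.+1 - v i).
Proof.
move=> /andP[i1 i2] h1 h2.
have hs1 : s 1 <= x.
  by apply: (le_trans _ h1); apply: s_le => //; exact: ltnW.
have hsn : x <= s n.
  by apply: (le_trans h2); apply: s_le.
have [/andP[j1 j2] hj1 hj2] := idx_spec hs1 hsn.
rewrite /polyc -/(idx x); set j := idx x in j1 j2 hj1 hj2 *.
have [ji|ij|<-] := ltngtP j i; last by [].
-
  have ej : j.+1 = i.
    apply/eqP; rewrite eqn_leq ji /= leqNgt; apply/negP => h.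
    have : s j.+1 < s i by apply: s_lt => //; exact: ltnW.
    by rewrite ltNge (le_trans h1 hj2).
  have hx : x = s i.
    apply/eqP; rewrite eq_le h1 andbT; by rewrite -ej.
  have hne : s j.+1 - s j != 0 by rewrite subr_eq0 gt_eqF // sinc // j1 j2.
  rewrite hx -ej (subrr (s j.+1)) mul0r scale0r addr0 (divff hne) scale1r.
  by rewrite addrC subrK.
-
  have ej : j = i.+1.
    apply/eqP; rewrite eqn_leq ij andbT; rewrite leqNgt; apply/negP => h.
    have : s i.+1 < s j by apply: s_lt => //; exact: ltnW.
    by rewrite ltNge (le_trans hj1 h2).
  have hx : x = s j.
    apply/eqP; rewrite eq_le hj1 andbT; by rewrite ej.
  have hne : s i.+1 - s i != 0 by rewrite subr_eq0 gt_eqF // sinc // i1 i2.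
  rewrite hx (subrr (s j)) mul0r scale0r addr0 ej (divff hne) scale1r.
  by rewrite addrC subrK.
Qed.

Lemma polyc_lin i l : (1 <= i < n)%N -> 0 <= l <= 1 ->
  polyc n s v (s i + l * (s i.+1 - s i)) = v i + l *: (v i.+1 - v i).
Proof.
move=> hi /andP[l0 l1].
have hd : 0 < s i.+1 - s i by rewrite subr_gt0 sinc.
rewrite (@polyc_at i) //.
- by congr (_ + _ *: _); rewrite addrC addKr mulfK // gt_eqF.
- by rewrite lerDl mulr_ge0 // ltW.
- by rewrite -lerBrDl ler_piMl // ltW.
Qed.

Lemma polyc_node i : (1 <= i <= n)%N -> polyc n s v (s i) = v i.
Proof.
move=> /andP[i1 i2]; case: (ltnP i n) => hin.
  have := @polyc_lin i 0; rewrite mul0r addr0 scale0r addr0; apply.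
    by rewrite i1.
  by rewrite lexx ler01.
have ein : i = n by apply/eqP; rewrite eqn_leq i2.
have hp : (1 <= i.-1 < n)%N.
  by rewrite ein; case: (n) n2 => [|[|k]] // _; rewrite /= ltnSn.
have := @polyc_lin i.-1 1; rewrite mul1r scale1r (addrC (v i.-1)) subrK.
rewrite (addrC (s i.-1)) subrK prednK; last by rewrite (leq_trans _ i1).
apply => //; first by case/andP: hp => -> _; rewrite i2.
by rewrite ler01 lexx.
Qed.

Definition Mb := \big[Order.max/0]_(1 <= i < n.+1) en (v i).

Lemma Mb_ge i : (1 <= i <= n)%N -> en (v i) <= Mb.
Proof.
move=> hi; rewrite /Mb.
apply: (@le_bigmax_seq _ _ _ _ 0 i xpredT (fun i => en (v i))) => //.
by rewrite mem_index_iota ltnS.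
Qed.

Lemma polyc_bounded x : s 1 <= x -> x <= s n -> en (polyc n s v x) <= 3 * Mb.
Proof.
move=> h1 hn; have [/andP[j1 j2] hj1 hj2] := idx_spec h1 hn.
rewrite (@polyc_at (idx x)) ?j1 //.
set j := idx x in j1 j2 hj1 hj2 *.
set l := (x - s j) / (s j.+1 - s j).
have hd : 0 < s j.+1 - s j by rewrite subr_gt0 sinc // j1.
have l0 : 0 <= l by apply: divr_ge0; [rewrite subr_ge0 | exact: ltW].
have l1 : l <= 1 by rewrite ler_pdivrMr // mul1r lerD2r.
apply: le_trans (enorm_triangle _ _) _.
rewrite enormZ ger0_norm //.
have e1 : en (v j) <= Mb by apply: Mb_ge; rewrite j1 ltnW.
have e2 : en (v j.+1) <= Mb by apply: Mb_ge; rewrite j2.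
have e3 : en (v j.+1 - v j) <= 2 * Mb.
  by apply: le_trans (enorm_triangle _ _) _; rewrite enormN mulr2n mulrDl mul1r lerD.
have e4 : l * en (v j.+1 - v j) <= 2 * Mb.
  apply: le_trans e3; rewrite ler_piMl // enorm_ge0 //.
have : (3 : R) * Mb = Mb + 2 * Mb by rewrite (_ : (3:R) = 1 + 2) ?mulrDl ?mul1r //.
move=> ->; exact: lerD.
Qed.

Definition Lc := \big[Order.max/0]_(1 <= i < n) (en (v i.+1 - v i) / (s i.+1 - s i)).

Lemma Lc_ge0 : 0 <= Lc.
Proof.
rewrite /Lc; elim/big_rec: _ => // i y _ hy.
by rewrite le_max hy orbT.
Qed.

Lemma seg_lip i x y : (1 <= i < n)%N -> s i <= x <= s i.+1 -> s i <= y <= s i.+1 ->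
  en (polyc n s v x - polyc n s v y) <= Lc * `|x - y|.
Proof.
move=> hi /andP[x1 x2] /andP[y1 y2].
have hd : 0 < s i.+1 - s i by rewrite subr_gt0 sinc.
rewrite (polyc_at hi x1 x2) (polyc_at hi y1 y2).
rewrite opprD addrA (addrC (v i)) addrK -scalerBl enormZ.
rewrite -mulrBl (_ : x - s i - (y - s i) = x - y); last by ring.
rewrite normrM (gtr0_norm (x := (s i.+1 - s i)^-1)); last by rewrite invr_gt0.
have hL : en (v i.+1 - v i) / (s i.+1 - s i) <= Lc.
  apply: (@le_bigmax_seq _ _ _ _ 0 i xpredT (fun i => en (v i.+1 - v i) / (s i.+1 - s i))) => //.
  by rewrite mem_index_iota.
rewrite (_ : `|x - y| * (s i.+1 - s i)^-1 * en (v i.+1 - v i) =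
   en (v i.+1 - v i) / (s i.+1 - s i) * `|x - y|); last by ring.
by rewrite ler_wpM2r.
Qed.

Lemma lip_k k : forall i x y, (1 <= i)%N -> (i + k < n)%N ->
  s i <= x <= s i.+1 -> s (i + k) <= y <= s (i + k).+1 -> x <= y ->
  en (polyc n s v y - polyc n s v x) <= Lc * (y - x).
Proof.
elim: k => [|k IH] i x y i1 ik hx hy xy.
  rewrite addn0 in ik hy.
  rewrite -(ger0_norm (x := y - x)) ?subr_ge0 //.
  by apply: (@seg_lip i) => //; rewrite i1.
set z := s (i + k).+1.
have ik' : (i + k < n)%N by rewrite (leq_trans _ ik) // addnS.
have hz1 : s (i + k) <= z <= s (i + k).+1.
  rewrite /z lexx andbT; apply: ltW; apply: sinc; rewrite ik' andbT.
  exact: leq_trans i1 (leq_addr _ _).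
have hz2 : s (i + k.+1) <= z <= s (i + k.+1).+1.
  rewrite addnS /z lexx /=; apply: ltW; apply: sinc; by rewrite -addnS ik andbT addnS.
have xz : x <= z.
  case/andP: hx => _ hx; apply: (le_trans hx); apply: s_le => //.
  by rewrite ltnS leq_addr.
have zy : z <= y by case/andP: hy; rewrite addnS.
have e1 := IH i x z i1 ik' hx hz1 xz.
have e2 : en (polyc n s v y - polyc n s v z) <= Lc * (y - z).
  rewrite -(ger0_norm (x := y - z)) ?subr_ge0 //.
  by apply: (@seg_lip (i + k.+1)) => //; rewrite ik andbT addnS.
apply: le_trans (enorm_tri3 _ (polyc n s v z) _) _.
rewrite (_ : y - x = (y - z) + (z - x)); last by ring.
by rewrite mulrDr lerD.
Qed.

Lemma polyc_lip x y : s 1 <= x <= s n -> s 1 <= y <= s n ->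
  en (polyc n s v x - polyc n s v y) <= Lc * `|x - y|.
Proof.
wlog xy : x y / x <= y.
  move=> W hx hy; case: (boolP (x <= y)) => h; first exact: (W x y h hx hy).
  rewrite enormB distrC; apply: (W y x) => //; rewrite -ltNge in h; exact: ltW.
move=> /andP[x1 xn] /andP[y1 yn].
have [/andP[i1 i2] hi1 hi2] := idx_spec x1 xn.
have [/andP[j1 j2] hj1 hj2] := idx_spec y1 yn.
rewrite enormB distrC ger0_norm ?subr_ge0 //.
case: (leqP (idx x) (idx y)) => hij.
  apply: (@lip_k (idx y - idx x) (idx x)) => //.
  - by rewrite subnKC.
  - by rewrite hi1.
  - by rewrite subnKC // hj1.
have ex : x = y.
  apply/eqP; rewrite eq_le xy /=; apply: (le_trans hj2); apply: (le_trans _ hi1).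
  by apply: s_le => //; exact: ltnW.
by rewrite ex subrr enorm0 subrr mulr0.
Qed.
End Poly.

Section F.
Variable R : realType.
Variable d : nat.
Local Notation en := (@enorm R d).
Local Notation crv := (curve R d).
Lemma mono_onto_cont (g : R -> R) :
  (forall x, I01 x -> I01 (g x)) ->
  (forall x y, I01 x -> I01 y -> x <= y -> g x <= g y) ->
  (forall y, I01 y -> exists x, I01 x /\ g x = y) ->
  {within @I01 R, continuous g}.
Proof.
move=> gI gm gs; rewrite continuous_subspace_in => x /set_mem Ix.
apply/cvgrPdist_lt => e e0.
rewrite -(nbhs_subspace_in Ix) near_withinE /=.
have gx := gI x Ix; case/andP: gx => gx0 gx1.
have [d1 [d1p Hd1]] : exists d1 : R, 0 < d1 /\ forall y, I01 y -> x - d1 < y -> g x - e < g y.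
  case: (lerP 0 (g x - e / 2)) => ha.
    have Ia : I01 (g x - e / 2).
      by rewrite /I01 /= ha /= (le_trans _ gx1) // lerBlDr lerDl divr_ge0 // ltW.
    have [ua [Iua gua]] := gs _ Ia.
    have uax : ua < x.
      rewrite ltNge; apply/negP => xua.
      have := gm _ _ Ix Iua xua; rewrite gua; lra.
    exists (x - ua); split; first by rewrite subr_gt0.
    move=> y Iy; rewrite opprB addrCA subrr addr0 => hy.
    have := gm _ _ Iua Iy (ltW hy); rewrite gua; apply: lt_le_trans.
    lra.
  exists 1; split => // y /andP[y0 y1] _.
  have Iy : I01 y by rewrite /I01 /= y0 y1.
  have /andP[gy0 _] := gI y Iy; lra.
have [d2 [d2p Hd2]] : exists d2 : R, 0 < d2 /\ forall y, I01 y -> y < x + d2 -> g y < g x + e.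
  case: (lerP (g x + e / 2) 1) => ha.
    have Ia : I01 (g x + e / 2).
      by rewrite /I01 /= ha andbT addr_ge0 // divr_ge0 // ltW.
    have [ua [Iua gua]] := gs _ Ia.
    have uax : x < ua.
      rewrite ltNge; apply/negP => xua.
      have := gm _ _ Iua Ix xua; rewrite gua; lra.
    exists (ua - x); split; first by rewrite subr_gt0.
    move=> y Iy; rewrite addrCA subrr addr0 => hy.
    have := gm _ _ Iy Iua (ltW hy); rewrite gua => h; apply: (le_lt_trans h).
    lra.
  exists 1; split => // y /andP[y0 y1] _.
  have Iy : I01 y by rewrite /I01 /= y0 y1.
  have /andP[_ gy1] := gI y Iy.
  lra.
apply/nbhs_ballP; exists (Num.min d1 d2); first by rewrite /= lt_min d1p d2p.
move=> y; rewrite -ball_normE /= lt_min => /andP[h1 h2] Iy.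
have Iy' : I01 y by [].
rewrite /from_subspace /=.
have /andP[a1 a2] : x - d1 < y < x + d1 by rewrite -ltr_distlC.
have /andP[b1 b2] : x - d2 < y < x + d2 by rewrite -ltr_distlC.
have l1 := Hd1 y Iy' a1.
have l2 := Hd2 y Iy' b2.
rewrite ltr_distlC; apply/andP; split; lra.
Qed.

Lemma cont_comb (g h : R -> R) a b : {within @I01 R, continuous g} ->
  {within @I01 R, continuous h} -> {within @I01 R, continuous (fun x => a * g x + b * h x)}.
Proof.
move=> cg ch x; apply: cvgD; [apply: cvgMr; exact: cg | apply: cvgMr; exact: ch].
Qed.

Definition Wm (g : R -> R) := [/\ forall x, I01 x -> I01 (g x),
  forall x y, I01 x -> I01 y -> x <= y -> g x <= g y &
  forall y, I01 y -> exists x, I01 x /\ g x = y].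

Lemma I0 : I01 (0 : R). Proof. by rewrite /I01 /= lexx ler01. Qed.
Lemma I1 : I01 (1 : R). Proof. by rewrite /I01 /= lexx ler01. Qed.

Lemma Wm_cont g : Wm g -> {within @I01 R, continuous g}.
Proof. by case=> *; apply: mono_onto_cont. Qed.

Lemma Wm_id : Wm id.
Proof. by split => // y Iy; exists y. Qed.

Lemma Wm_comp f g : Wm f -> Wm g -> Wm (f \o g).
Proof.
case=> f1 f2 f3 [g1 g2 g3]; split => /=.
- by move=> x Ix; apply: f1; apply: g1.
- by move=> x y Ix Iy xy; apply: f2; [exact: g1|exact: g1|exact: g2].
- move=> y Iy; have [u [Iu fu]] := f3 y Iy; have [w [Iw gw]] := g3 u Iu.
  by exists w; rewrite gw.
Qed.

Lemma Wm_ends g : Wm g -> g 0 = 0 /\ g 1 = 1.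
Proof.
case=> g1 g2 g3; split.
  have [u [Iu gu]] := g3 0 I0.
  have /andP[h0 _] := g1 0 I0.
  have : g 0 <= g u by apply: g2 => //; [exact: I0 | case/andP: Iu].
  by rewrite gu => h; apply/eqP; rewrite eq_le h h0.
have [u [Iu gu]] := g3 1 I1.
have /andP[_ h1] := g1 1 I1.
have : g u <= g 1 by apply: g2 => //; [exact: I1 | case/andP: Iu].
by rewrite gu => h; apply/eqP; rewrite eq_le h h1.
Qed.

Lemma homeo_le (g : R -> R) : homeo01 g -> forall x y, I01 x -> I01 y -> x <= y -> g x <= g y.
Proof.
case=> _ [_ [_ gs]] x y Ix Iy; rewrite le_eqVlt => /orP[/eqP ->//|xy].
exact/ltW/gs.
Qed.

Lemma I01E : @I01 R = `[0, 1]%classic.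
Proof. by rewrite /I01; apply/seteqP; split => x /=; rewrite in_itv. Qed.

Lemma homeo_Wm (g : R -> R) : homeo01 g -> Wm g.
Proof.
move=> hg; have gle := homeo_le hg; case: hg => gc [g0 [g1 gs]].
split => //.
- move=> x Ix; have /andP[x0 x1] := Ix.
  have a := gle 0 x I0 Ix x0; have b := gle x 1 Ix I1 x1.
  by rewrite /I01 /= -g0 -g1 a b.
- move=> y /andP[y0 y1].
  have := @IVT R g 0 1 y ler01; rewrite -I01E => /(_ gc).
  rewrite g0 g1 (min_idPl ler01) (max_idPr ler01) y0 y1 => /(_ isT) [x].
  by rewrite in_itv => /= x01 gx; exists x.
Qed.

Lemma homeo_id : homeo01 (@id R).
Proof. by split; [exact: Wm_cont Wm_id | split]. Qed.

Definition bnd (A : crv) := exists M, forall x, I01 x -> en (A x) <= M.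

Definition Sg (A B : crv) (g : R -> R) := [set en (A (g x) - B x) | x in @I01 R].

Lemma Sg_ub A B (g : R -> R) : bnd A -> bnd B -> (forall x, I01 x -> I01 (g x)) ->
  has_ubound (Sg A B g).
Proof.
move=> [MA hA] [MB hB] gI; exists (MA + MB) => _ [x Ix <-].
apply: le_trans (enorm_triangle _ _) _; rewrite enormN.
by apply: lerD; [apply: hA; exact: gI | exact: hB].
Qed.

Lemma Sg_le A B (g : R -> R) x : bnd A -> bnd B -> (forall x, I01 x -> I01 (g x)) -> I01 x ->
  en (A (g x) - B x) <= sup (Sg A B g).
Proof.
move=> bA bB gI Ix; apply: ub_le_sup; first exact: Sg_ub.
by exists x.
Qed.

Lemma Sg_ge0 A B (g : R -> R) : bnd A -> bnd B -> (forall x, I01 x -> I01 (g x)) ->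
  0 <= sup (Sg A B g).
Proof.
move=> bA bB gI; apply: le_trans (Sg_le bA bB gI I0); exact: enorm_ge0.
Qed.

Definition Fs (A B : crv) := [set sup (Sg A B g) | g in @homeo01 R].

Lemma frechetE A B : frechet A B = inf (Fs A B).
Proof. by []. Qed.

Lemma Fs_inf A B : bnd A -> bnd B -> has_inf (Fs A B).
Proof.
move=> bA bB; split; first by exists (sup (Sg A B id)), id => //; exact: homeo_id.
exists 0 => _ [g hg <-]; apply: Sg_ge0 => //; by case: (homeo_Wm hg).
Qed.

Lemma frechet_le_homeo A B (g : R -> R) c : bnd A -> bnd B -> homeo01 g ->
  (forall x, I01 x -> en (A (g x) - B x) <= c) -> frechet A B <= c.
Proof.
move=> bA bB hg hc; rewrite frechetE.
apply: (@le_trans _ _ (sup (Sg A B g))).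
  apply: ge_inf; first by case: (Fs_inf bA bB).
  by exists g.
apply: ge_sup; first by exists (en (A (g 0) - B 0)), 0 => //; exact: I0.
by move=> _ [x Ix <-]; apply: hc.
Qed.

Definition closeW (A B : crv) (c : R) := forall e, 0 < e ->
  exists g, Wm g /\ forall x, I01 x -> en (A (g x) - B x) <= c + e.

Lemma frechet_homeo A B c e : bnd A -> bnd B -> frechet A B <= c -> 0 < e ->
  exists g, homeo01 g /\ forall x, I01 x -> en (A (g x) - B x) <= c + e.
Proof.
move=> bA bB hf e0.
have [y [g hg <-] hy] := inf_adherent e0 (Fs_inf bA bB).
exists g; split => // x Ix.
have gI : forall x, I01 x -> I01 (g x) by case: (homeo_Wm hg).
apply: le_trans (Sg_le bA bB gI Ix) _.
rewrite -frechetE in hy; apply: ltW; apply: (lt_le_trans hy); by rewrite lerD2r.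
Qed.

Lemma frechet_closeW A B c : bnd A -> bnd B -> frechet A B <= c -> closeW A B c.
Proof.
move=> bA bB hf e e0; have [g [hg H]] := frechet_homeo bA bB hf e0.
by exists g; split => //; exact: homeo_Wm.
Qed.

Lemma closeW_le A B c c' : c <= c' -> closeW A B c -> closeW A B c'.
Proof.
move=> cc h e e0; have [g [wg H]] := h e e0; exists g; split => // x Ix.
by apply: le_trans (H x Ix) _; rewrite lerD2r.
Qed.

Lemma closeW_ext A A' B B' c : (forall x, I01 x -> A x = A' x) ->
  (forall x, I01 x -> B x = B' x) -> closeW A B c -> closeW A' B' c.
Proof.
move=> hA hB h e e0; have [g [wg H]] := h e e0; exists g; split => // x Ix.
have gI : I01 (g x) by case: wg => + _ _; apply.
by rewrite -hA // -hB //; apply: H.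
Qed.

Lemma closeW_refl A B c : 0 <= c -> (forall x, I01 x -> A x = B x) -> closeW A B c.
Proof.
move=> c0 h e e0; exists id; split; first exact: Wm_id.
move=> x Ix /=; rewrite h // subrr enorm0; apply: addr_ge0 => //; exact: ltW.
Qed.

Lemma closeW_trans A B C c1 c2 : closeW A B c1 -> closeW B C c2 -> closeW A C (c1 + c2).
Proof.
move=> h1 h2 e e0.
have e2 : 0 < e / 2 by rewrite divr_gt0.
have [g1 [w1 H1]] := h1 _ e2; have [g2 [w2 H2]] := h2 _ e2.
exists (g1 \o g2); split; first exact: Wm_comp.
move=> x Ix /=.
have Ig : I01 (g2 x) by case: w2 => + _ _; apply.
apply: le_trans (enorm_tri3 _ (B (g2 x)) _) _.
have := H1 _ Ig; have := H2 _ Ix; lra.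
Qed.

Lemma frechet_closeW_sym A B c : bnd A -> bnd B -> frechet A B <= c -> closeW B A c.
Proof.
move=> bA bB hf e e0; have [g [hg H]] := frechet_homeo bA bB hf e0.
have gle := homeo_le hg.
have [gI _ gs] := homeo_Wm hg.
have glt : forall x y, I01 x -> I01 y -> x < y -> g x < g y by case: hg => _ [_ [_]].
pose h y := get (fun x => I01 x /\ g x = y).
have hP : forall y, I01 y -> I01 (h y) /\ g (h y) = y.
  by move=> y Iy; apply: (@getPex _ (fun x => I01 x /\ g x = y)); apply: gs.
have ginj : forall x y, I01 x -> I01 y -> g x = g y -> x = y.
  move=> x y Ix Iy gxy; apply/eqP; rewrite eq_le !leNgt; apply/andP; split.
    by apply/negP => /(glt _ _ Iy Ix); rewrite gxy ltxx.
  by apply/negP => /(glt _ _ Ix Iy); rewrite gxy ltxx.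
exists h; split.
  split.
  - by move=> y Iy; case: (hP y Iy).
  - move=> x y Ix Iy xy; rewrite leNgt; apply/negP => hyx.
    have [Ihx ghx] := hP x Ix; have [Ihy ghy] := hP y Iy.
    have := glt _ _ Ihy Ihx hyx; rewrite ghx ghy => yx.
    by move: xy; rewrite leNgt yx.
  - move=> x Ix; exists (g x); split; first exact: gI.
    have [Ih gh] := hP (g x) (gI x Ix).
    by apply: ginj.
move=> y Iy; have [Ih gh] := hP y Iy.
by rewrite enormB; have := H _ Ih; rewrite gh.
Qed.

Definition lipc (A : crv) L := forall x y, I01 x -> I01 y -> en (A x - A y) <= L * `|x - y|.

Lemma closeW_frechet A B c L : bnd A -> bnd B -> 0 <= L -> lipc A L ->
  closeW A B c -> frechet A B <= c.
Proof.
move=> bA bB L0 lA h.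
apply/ler_addgt0Pr => e e0.
have e2 : 0 < e / 2 by rewrite divr_gt0.
have [g [wg H]] := h _ e2.
have [gI gm gs] := wg; have [g0 g1] := Wm_ends wg.
have gc := Wm_cont wg.
pose dl := Num.min (1/2) (e / 2 / (L + 1)).
have L1 : 0 < L + 1 by rewrite ltr_pwDr.
have dl0 : 0 < dl by rewrite /dl lt_min divr_gt0 //= divr_gt0.
have dl1 : dl < 1 by rewrite /dl gt_min; apply/orP; left; lra.
have dlL : L * dl <= e / 2.
  apply: (@le_trans _ _ ((L + 1) * dl)); first by apply: ler_wpM2r; [exact: ltW | lra].
  by rewrite mulrC -ler_pdivlMr // /dl ge_min lexx orbT.
pose psi x := (1 - dl) * g x + dl * x.
have hpsi : homeo01 psi.
  split; first by have := @cont_comb g id (1 - dl) dl gc (Wm_cont Wm_id).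
  split; first by rewrite /psi g0 !mulr0 addr0.
  split; first by rewrite /psi g1 !mulr1 subrK.
  move=> x y Ix Iy xy; rewrite /psi.
  have := gm _ _ Ix Iy (ltW xy) => gxy.
  have : (1 - dl) * g x <= (1 - dl) * g y by rewrite ler_wpM2l // subr_ge0 ltW.
  have : dl * x < dl * y by rewrite ltr_pM2l.
  lra.
apply: (frechet_le_homeo bA bB hpsi) => x Ix.
have Igx := gI x Ix.
have Ipsi : I01 (psi x).
  have /andP[x0 x1] := Ix; have /andP[gx0 gx1] := Igx.
  have h1 : 0 <= (1 - dl) * g x by rewrite mulr_ge0 // subr_ge0 ltW.
  have h2 : (1 - dl) * g x <= 1 - dl by rewrite ler_piMr // subr_ge0 ltW.
  have h3 : 0 <= dl * x by rewrite mulr_ge0 // ltW.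
  have h4 : dl * x <= dl by rewrite ler_piMr // ltW.
  rewrite /I01 /= /psi; apply/andP; split; lra.
apply: le_trans (enorm_tri3 _ (A (g x)) _) _.
have l1 := lA _ _ Ipsi Igx.
have dif : `|psi x - g x| <= dl.
  rewrite /psi (_ : (1 - dl) * g x + dl * x - g x = dl * (x - g x)); last by ring.
  have /andP[x0 x1] := Ix; have /andP[gx0 gx1] := Igx.
  have dd : `|x - g x| <= 1 by rewrite ler_norml; apply/andP; split; lra.
  rewrite normrM (ger0_norm (ltW dl0)).
  by have := ler_wpM2l (ltW dl0) dd; rewrite mulr1.
have l2 : L * `|psi x - g x| <= e / 2.
  by apply: le_trans dlL; rewrite ler_wpM2l.
have := H x Ix; lra.
Qed.
End F.

Section G.
Variable R : realType.
Variable d : nat.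
Local Notation en := (@enorm R d).
Local Notation crv := (curve R d).

Lemma Wm_I01 (g : R -> R) x : Wm g -> I01 x -> I01 (g x).
Proof. by case=> + _ _; apply. Qed.

Lemma closeW_glue (A B : crv) (a1 a2 c : R) : 0 <= a1 -> a1 <= a2 -> a2 <= 1 ->
  closeW (subcurve A 0 a1) (fun s => B (s / 3)) c ->
  closeW (subcurve A a1 a2) (fun s => B ((1 + s) / 3)) c ->
  closeW (subcurve A a2 1) (fun s => B ((2 + s) / 3)) c ->
  closeW A B c.
Proof.
move=> h1 h12 h2 H1 H2 H3 e e0.
have [g1 [w1 K1]] := H1 e e0; have [g2 [w2 K2]] := H2 e e0; have [g3 [w3 K3]] := H3 e e0.
have [e10 e11] := Wm_ends w1; have [e20 e21] := Wm_ends w2; have [e30 e31] := Wm_ends w3.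
pose p1 u := a1 * g1 (3 * u).
pose p2 u := a1 + (a2 - a1) * g2 (3 * u - 1).
pose p3 u := a2 + (1 - a2) * g3 (3 * u - 2).
pose gam u := if u <= 1/3 then p1 u else if u <= 2/3 then p2 u else p3 u.
have q1 : forall u : R, 0 <= u <= 1/3 -> I01 (3 * u) by move=> u /andP[hh1 hh2]; rewrite /I01 /=; apply/andP; split; lra.
have q2 : forall u : R, 1/3 <= u <= 2/3 -> I01 (3 * u - 1) by move=> u /andP[hh1 hh2]; rewrite /I01 /=; apply/andP; split; lra.
have q3 : forall u : R, 2/3 <= u <= 1 -> I01 (3 * u - 2) by move=> u /andP[hh1 hh2]; rewrite /I01 /=; apply/andP; split; lra.
have G1 : forall u : R, 0 <= u <= 1/3 -> gam u = p1 u by move=> u /andP[_ hu]; rewrite /gam hu.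
have G2 : forall u : R, 1/3 <= u <= 2/3 -> gam u = p2 u.
  move=> u /andP[u1 u2]; rewrite /gam; case: ifP => hu; last by rewrite u2.
  have -> : u = 1/3 by apply/eqP; rewrite eq_le hu u1.
  rewrite /p1 /p2 (_ : 3 * (1/3) = 1 :> R); last by field.
  by rewrite (_ : 1 - 1 = 0 :> R) ?subrr // e11 e20 mulr0 mulr1 addr0.
have G3 : forall u : R, 2/3 <= u <= 1 -> gam u = p3 u.
  move=> u /andP[u1 u2]; rewrite /gam; case: ifP => hu; first by lra.
  case: ifP => hu2 //.
  have -> : u = 2/3 by apply/eqP; rewrite eq_le hu2 u1.
  rewrite /p2 /p3 (_ : 3 * (2/3) - 1 = 1 :> R); last by field.
  rewrite (_ : 3 * (2/3) - 2 = 0 :> R); last by field.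
  by rewrite e21 e30 mulr0 mulr1 addr0 addrC subrK.
have P1 : forall u : R, 0 <= u <= 1/3 -> 0 <= p1 u <= a1.
  move=> u hu; have /andP[x0 x1] := Wm_I01 w1 (q1 u hu).
  rewrite /p1 mulr_ge0 //= ler_piMr //.
have P2 : forall u : R, 1/3 <= u <= 2/3 -> a1 <= p2 u <= a2.
  move=> u hu; have /andP[x0 x1] := Wm_I01 w2 (q2 u hu).
  have : 0 <= (a2 - a1) * g2 (3 * u - 1) by rewrite mulr_ge0 // subr_ge0.
  have : (a2 - a1) * g2 (3 * u - 1) <= a2 - a1 by rewrite ler_piMr // subr_ge0.
  rewrite /p2; move=> *; apply/andP; split; lra.
have P3 : forall u : R, 2/3 <= u <= 1 -> a2 <= p3 u <= 1.
  move=> u hu; have /andP[x0 x1] := Wm_I01 w3 (q3 u hu).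
  have : 0 <= (1 - a2) * g3 (3 * u - 2) by rewrite mulr_ge0 // subr_ge0.
  have : (1 - a2) * g3 (3 * u - 2) <= 1 - a2 by rewrite ler_piMr // subr_ge0.
  rewrite /p3; move=> *; apply/andP; split; lra.
have cases : forall u : R, I01 u -> [\/ 0 <= u <= 1/3, 1/3 <= u <= 2/3 | 2/3 <= u <= 1].
  move=> u /andP[u0 u1]; case: (lerP u (1/3)) => ha; first by constructor 1; rewrite ?u0 ?ha.
  case: (lerP u (2/3)) => hb; first by constructor 2; rewrite ?hb ?(ltW ha).
  by constructor 3; rewrite ?u1 ?(ltW hb).
exists gam; split.
- split.
  + move=> u Iu; have /andP[u0 u1] := Iu.
    case: (cases u Iu) => hu.
    * rewrite G1 //; have := P1 u hu; rewrite /I01 /=; move=> /andP[hh1 hh2]; apply/andP; split; lra.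
    * rewrite G2 //; have := P2 u hu; rewrite /I01 /=; move=> /andP[hh1 hh2]; apply/andP; split; lra.
    * rewrite G3 //; have := P3 u hu; rewrite /I01 /=; move=> /andP[hh1 hh2]; apply/andP; split; lra.
  + move=> x y Ix Iy xy.
    case: (cases x Ix) => hx; case: (cases y Iy) => hy.
    * rewrite !G1 //; rewrite /p1 ler_wpM2l //; case: w1 => _ m1 _; apply: m1; [exact: q1|exact: q1|lra].
    * rewrite G1 // G2 //; have := P1 x hx; have := P2 y hy; move=> /andP[hh1 hh2] /andP[hh3 hh4]; lra.
    * rewrite G1 // G3 //; have := P1 x hx; have := P3 y hy; move=> /andP[hh1 hh2] /andP[hh3 hh4]; lra.
    * have -> : x = y by move: hx hy => /andP[hh1 hh2] /andP[hh3 hh4]; apply/eqP; rewrite eq_le; apply/andP; split; lra.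
      exact: lexx.
    * rewrite !G2 //; rewrite /p2 lerD2l ler_wpM2l ?subr_ge0 //; case: w2 => _ m2 _; apply: m2; [exact: q2|exact: q2|lra].
    * rewrite G2 // G3 //; have := P2 x hx; have := P3 y hy; move=> /andP[hh1 hh2] /andP[hh3 hh4]; lra.
    * have -> : x = y by move: hx hy => /andP[hh1 hh2] /andP[hh3 hh4]; apply/eqP; rewrite eq_le; apply/andP; split; lra.
      exact: lexx.
    * have -> : x = y by move: hx hy => /andP[hh1 hh2] /andP[hh3 hh4]; apply/eqP; rewrite eq_le; apply/andP; split; lra.
      exact: lexx.
    * rewrite !G3 //; rewrite /p3 lerD2l ler_wpM2l ?subr_ge0 //; case: w3 => _ m3 _; apply: m3; [exact: q3|exact: q3|lra].
  + move=> y /andP[y0 y1].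
    case: (boolP (y <= a1)) => ya1.
      have [a10|a1p] := eqVneq a1 0.
        have y00 : y = 0 by apply/eqP; rewrite eq_le y0 andbT -a10.
        exists 0; split; first exact: I0.
        rewrite G1; last by rewrite lexx; lra.
        by rewrite /p1 a10 mul0r y00.
      have a1p' : 0 < a1 by rewrite lt_def a1p h1.
      have Iz : I01 (y / a1) by rewrite /I01 /= divr_ge0 //= ler_pdivrMr // mul1r.
      have [w [Iw gw]] := (match w1 with And3 _ _ s => s end) _ Iz.
      have /andP[w0 w1'] := Iw.
      have hu : 0 <= w / 3 <= 1/3 by apply/andP; split; lra.
      exists (w / 3); split; first by rewrite /I01 /=; apply/andP; split; lra.
      rewrite G1 // /p1 (_ : 3 * (w / 3) = w); last by field.
      by rewrite gw mulrC divfK.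
    rewrite -ltNge in ya1.
    case: (boolP (y <= a2)) => ya2.
      have hd : 0 < a2 - a1 by lra.
      have Iz : I01 ((y - a1) / (a2 - a1)).
        rewrite /I01 /=; apply/andP; split; [apply: divr_ge0; lra | rewrite ler_pdivrMr // mul1r; lra].
      have [w [Iw gw]] := (match w2 with And3 _ _ s => s end) _ Iz.
      have /andP[w0 w1'] := Iw.
      have hu : 1/3 <= (1 + w) / 3 <= 2/3 by apply/andP; split; lra.
      exists ((1 + w) / 3); split; first by rewrite /I01 /=; apply/andP; split; lra.
      rewrite G2 // /p2 (_ : 3 * ((1 + w) / 3) - 1 = w); last by field.
      rewrite gw mulrC divfK ?gt_eqF //; ring.
    rewrite -ltNge in ya2.
    have hd : 0 < 1 - a2 by lra.
    have Iz : I01 ((y - a2) / (1 - a2)).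
      rewrite /I01 /=; apply/andP; split; [apply: divr_ge0; lra | rewrite ler_pdivrMr // mul1r; lra].
    have [w [Iw gw]] := (match w3 with And3 _ _ s => s end) _ Iz.
    have /andP[w0 w1'] := Iw.
    have hu : 2/3 <= (2 + w) / 3 <= 1 by apply/andP; split; lra.
    exists ((2 + w) / 3); split; first by rewrite /I01 /=; apply/andP; split; lra.
    rewrite G3 // /p3 (_ : 3 * ((2 + w) / 3) - 2 = w); last by field.
    rewrite gw mulrC divfK ?gt_eqF //; ring.
- move=> u Iu; case: (cases u Iu) => hu.
  + have := K1 _ (q1 u hu); rewrite /subcurve (_ : 3 * u / 3 = u); last by field.
    by rewrite G1 // /p1 subr0 add0r mulrC.
  + have := K2 _ (q2 u hu); rewrite /subcurve (_ : (1 + (3 * u - 1)) / 3 = u); last by field.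
    by rewrite G2 // /p2 (mulrC (a2 - a1)).
  + have := K3 _ (q3 u hu); rewrite /subcurve (_ : (2 + (3 * u - 2)) / 3 = u); last by field.
    by rewrite G3 // /p3 (mulrC (1 - a2)).
Qed.
End G.

Section M.
Variable R : realType.
Variable d : nat.
Local Notation en := (@enorm R d).
Local Notation crv := (curve R d).

Lemma unif_inc n : (2 <= n)%N -> forall i, (1 <= i < n)%N ->
  ((i%:R - 1) / (n%:R - 1) : R) < (i.+1%:R - 1) / (n%:R - 1).
Proof.
move=> n2 i hi; have hn : (0 : R) < n%:R - 1.
  by rewrite subr_gt0 (_ : (1 : R) = 1%:R) // ltr_nat.
by rewrite ltr_pM2r ?invr_gt0 // ltrD2r ltr_nat.
Qed.

Lemma seg_val (a b : pt R d) s : I01 s -> seg a b s = a + s *: (b - a).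
Proof.
move=> /andP[s0 s1]; rewrite /seg /polyu /=.
have := @polyc_lin R d 2 (fun i => (i%:R - 1) / (2%:R - 1)) (fun i => nth 0 [:: a; b] i.-1) isT (@unif_inc 2 isT) 1 s isT.
rewrite s0 s1 => /(_ isT) /=.
rewrite (_ : ((1%:R - 1) / (2%:R - 1) + s * ((2%:R - 1) / (2%:R - 1) - (1%:R - 1) / (2%:R - 1)) : R) = s) //.
by field.
Qed.

Lemma pi4_val (v1 v2 v3 v4 : pt R d) k s : (1 <= k < 4)%N -> I01 s ->
  polyu [:: v1; v2; v3; v4] ((k%:R - 1 + s) / 3) =
  nth 0 [:: v1; v2; v3; v4] k.-1 + s *: (nth 0 [:: v1; v2; v3; v4] k - nth 0 [:: v1; v2; v3; v4] k.-1).
Proof.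
move=> hk /andP[s0 s1]; rewrite /polyu /=.
have := @polyc_lin R d 4 (fun i => (i%:R - 1) / (4%:R - 1)) (fun i => nth 0 [:: v1; v2; v3; v4] i.-1) isT (@unif_inc 4 isT) k s hk.
rewrite s0 s1 => /(_ isT) /=.
rewrite (_ : ((k%:R - 1) / (4%:R - 1) + s * ((k.+1%:R - 1) / (4%:R - 1) - (k%:R - 1) / (4%:R - 1)) : R) = (k%:R - 1 + s) / 3) //.
rewrite -addn1 natrD; by field.
Qed.

Lemma bnd_seg (a b : pt R d) : bnd (seg a b).
Proof.
exists (en a + en (b - a)) => s Is; rewrite seg_val //.
apply: le_trans (enorm_triangle _ _) _; rewrite lerD2l enormZ.
have /andP[s0 s1] := Is; rewrite ger0_norm //.
by rewrite ler_piMl // enorm_ge0.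
Qed.

Lemma bnd_polyu4 (vs : seq (pt R d)) : size vs = 4%N -> bnd (polyu vs).
Proof.
move=> hs; rewrite /bnd /polyu hs.
exists (3 * Mb 4 (fun i => nth 0 vs i.-1)) => x /andP[x0 x1].
apply: (@polyc_bounded R d 4 (fun i => (i%:R - 1) / (4%:R - 1)) _ isT (@unif_inc 4 isT)).
  by rewrite (_ : (1%:R - 1) / (4%:R - 1) = 0 :> R) //; rewrite subrr mul0r.
by rewrite (_ : (4%:R - 1) / (4%:R - 1) = 1 :> R) // divff // subr_eq0 pnatr_eq1.
Qed.

Section Main.
Variables (m : nat) (t : nat -> R) (p : nat -> pt R d) (Delta : R).
Hypotheses (Dp : 0 < Delta) (m2 : (2 <= m)%N) (t1 : t 1%N = 0) (tm : t m = 1)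
  (tinc : forall i, (1 <= i < m)%N -> t i < t i.+1).
Local Notation P := (Pc m t p).

Lemma t_le i j : (1 <= i)%N -> (i <= j)%N -> (j <= m)%N -> t i <= t j.
Proof. exact: (@s_le R m t tinc). Qed.

Lemma t_lt i j : (1 <= i)%N -> (i < j)%N -> (j <= m)%N -> t i < t j.
Proof. exact: (@s_lt R m t tinc). Qed.

Lemma P_node i : (1 <= i <= m)%N -> P (t i) = p i.
Proof. exact: (@polyc_node R d m t p m2 tinc). Qed.

Lemma sub_in a b x : (1 <= a)%N -> (a <= b)%N -> (b <= m)%N -> I01 x ->
  t 1%N <= t a + x * (t b - t a) <= t m.
Proof.
move=> a1 ab bm /andP[x0 x1].
have h1 := t_le (leqnn 1) a1 (leq_trans ab bm).
have h2 := t_le a1 ab bm.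
have h3 := t_le (leq_trans a1 ab) bm (leqnn m).
have h4 : 0 <= x * (t b - t a) by rewrite mulr_ge0 // subr_ge0.
have h5 : x * (t b - t a) <= t b - t a by rewrite ler_piMl // subr_ge0.
apply/andP; split; lra.
Qed.

Lemma bnd_sub a b : (1 <= a)%N -> (a <= b)%N -> (b <= m)%N -> bnd (subcurve P (t a) (t b)).
Proof.
move=> a1 ab bm; exists (3 * Mb m p) => x Ix.
have /andP[h1 h2] := sub_in a1 ab bm Ix.
exact: (polyc_bounded p m2 tinc h1 h2).
Qed.

Lemma lip_sub a b : (1 <= a)%N -> (a <= b)%N -> (b <= m)%N ->
  lipc (subcurve P (t a) (t b)) (Lc m t p * (t b - t a)).
Proof.
move=> a1 ab bm x y Ix Iy; rewrite /subcurve.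
apply: le_trans (polyc_lip p m2 tinc (sub_in a1 ab bm Ix) (sub_in a1 ab bm Iy)) _.
have hd : 0 <= t b - t a by rewrite subr_ge0 t_le.
rewrite (_ : t a + x * (t b - t a) - (t a + y * (t b - t a)) = (x - y) * (t b - t a)); last by ring.
by rewrite normrM (ger0_norm hd) mulrA (mulrC _ `|x - y|) -mulrA mulrC.
Qed.


Lemma tau_val i j s : I01 s -> tau m t p i j s = P (t i) + s *: (P (t j) - P (t i)).
Proof. exact: seg_val. Qed.

Lemma frechet_const z : (1 <= z <= m)%N ->
  frechet (tau m t p z z) (subcurve P (t z) (t z)) <= 4 * Delta.
Proof.
move=> /andP[z1 zm].
apply: (@frechet_le_homeo R d _ _ id).
- exact: bnd_seg.
- exact: bnd_sub.
- exact: homeo_id.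
move=> s Is.
rewrite tau_val // /subcurve /= !subrr scaler0 mulr0 !addr0 subrr enorm0.
by rewrite mulr_ge0 // ltW.
Qed.

Lemma xz_prop z : (1 <= z)%N ->
  xz m t p Delta z = z \/ (xgood m t p Delta z (xz m t p Delta z) /\ (1 <= xz m t p Delta z <= z)%N).
Proof.
move=> z1; rewrite /xz big_seq_cond.
elim/big_rec: _ => [|i y /andP[hi hg] hy]; first by left.
rewrite mem_index_iota in hi.
rewrite /minn; case: ifP => hiy; first by right; rewrite hg -ltnS.
by [].
Qed.

Lemma xz_good z x : (1 <= z < m)%N -> (xz m t p Delta z <= x <= z)%N ->
  frechet (tau m t p x z) (subcurve P (t x) (t z)) <= 4 * Delta.
Proof.
move=> /andP[z1 zm] /andP[h1 h2].
case: (xz_prop z1) => [e|[hg _]].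
  have -> : x = z by apply/eqP; rewrite eqn_leq h2 -e h1.
  by apply: frechet_const; rewrite z1 ltnW.
by move/allP: hg => /(_ x); rewrite mem_index_iota ltnS h1 h2 => /(_ isT).
Qed.

Lemma xz_ge1 z : (1 <= z)%N -> (1 <= xz m t p Delta z <= z)%N.
Proof. by move=> z1; case: (xz_prop z1) => [->|[_ ->]] //; rewrite z1 leqnn. Qed.

Lemma yz_prop z : (z < m)%N ->
  yz m t p Delta z = z.+1 \/ (ygood m t p Delta z (yz m t p Delta z) /\ (z.+1 <= yz m t p Delta z <= m)%N).
Proof.
move=> zm; rewrite /yz big_seq_cond.
elim/big_rec: _ => [|i y /andP[hi hg] hy]; first by left.
rewrite mem_index_iota in hi.
rewrite /maxn; case: ifP => hiy; last by right; rewrite hg -ltnS.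
by [].
Qed.

Lemma yz_good z y : (1 <= z < m)%N -> (z.+1 <= y <= yz m t p Delta z)%N ->
  frechet (tau m t p z.+1 y) (subcurve P (t z.+1) (t y)) <= 4 * Delta.
Proof.
move=> /andP[z1 zm] /andP[h1 h2].
case: (yz_prop zm) => [e|[hg _]].
  have -> : y = z.+1 by apply/eqP; rewrite eqn_leq h1 -e h2.
  by apply: frechet_const; rewrite zm.
by move/allP: hg => /(_ y); rewrite mem_index_iota ltnS h1 h2 => /(_ isT).
Qed.

Lemma yz_le z : (z < m)%N -> (z.+1 <= yz m t p Delta z <= m)%N.
Proof. by move=> zm; case: (yz_prop zm) => [->|[_ ->]] //; rewrite leqnn. Qed.


Lemma core z i j x y : (1 <= z < m)%N -> (1 <= i <= j)%N -> (j <= m)%N ->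
  (xz m t p Delta z <= x <= z)%N -> (z.+1 <= y <= yz m t p Delta z)%N ->
  frechet (pi4 m t p x z z.+1 y) (tau m t p i j) <= 2 * Delta ->
  frechet (subcurve P (t x) (t y)) (tau m t p i j) <= 6 * Delta.
Proof.
move=> hz hij jm hx hy hf.
have /andP[z1 zm] := hz.
have /andP[X1 _] := xz_ge1 z1.
have /andP[_ Ym] := yz_le zm.
have /andP[hx1 hx2] := hx; have /andP[hy1 hy2] := hy.
have x1 : (1 <= x)%N by apply: leq_trans X1 hx1.
have ym : (y <= m)%N by apply: leq_trans hy2 Ym.
have xy : (x < y)%N by apply: leq_ltn_trans hx2 hy1.
have txy : t x < t y := t_lt x1 xy ym.
have hd : t y - t x != 0 by rewrite subr_eq0 gt_eqF.
have tzx : t x <= t z := t_le x1 hx2 (ltnW zm).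
have tzz : t z < t z.+1 by apply: tinc; rewrite z1 zm.
have tzy : t z.+1 <= t y := t_le (leq_trans z1 (leqnSn z)) hy1 ym.
have hdp : 0 < t y - t x by rewrite subr_gt0.
set a1 := (t z - t x) / (t y - t x).
set a2 := (t z.+1 - t x) / (t y - t x).
have a10 : 0 <= a1 by rewrite /a1 divr_ge0 // ?subr_ge0 // ltW.
have a12 : a1 <= a2 by rewrite /a1 /a2 ler_pM2r ?invr_gt0 // lerD2r ltW.
have a21 : a2 <= 1 by rewrite /a2 ler_pdivrMr // mul1r lerD2r.
set A := subcurve P (t x) (t y).
have hglue : closeW A (pi4 m t p x z z.+1 y) (4 * Delta).
  apply: (@closeW_glue R d A (pi4 m t p x z z.+1 y) a1 a2 (4 * Delta) a10 a12 a21).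
  - have c1 := frechet_closeW_sym (bnd_seg _ _) (bnd_sub x1 hx2 (ltnW zm)) (xz_good hz hx).
    apply: closeW_ext c1 => s Is.
      rewrite /A /subcurve; congr (P _); rewrite /a1; field; exact: hd.
    rewrite seg_val // /pi4 (_ : s / 3 = (1%:R - 1 + s) / 3); last by rewrite subrr add0r.
    by rewrite pi4_val.
  - apply: closeW_refl; first by rewrite mulr_ge0 // ltW.
    move=> s Is; rewrite /A /subcurve.
    rewrite (_ : t x + (a1 + s * (a2 - a1)) * (t y - t x) = t z + s * (t z.+1 - t z)); last first.
      rewrite /a1 /a2; field; exact: hd.
    have e1 : P (t z + s * (t z.+1 - t z)) = p z + s *: (p z.+1 - p z).
      by apply: (polyc_lin p m2 tinc); [rewrite z1 zm | case/andP: Is => -> ->].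
    have e2 : pi4 m t p x z z.+1 y ((2%:R - 1 + s) / 3) = P (t z) + s *: (P (t z.+1) - P (t z)).
      exact: (@pi4_val _ _ _ _ 2 s).
    rewrite e1 (_ : (1 + s) / 3 = (2%:R - 1 + s) / 3); last first.
      by congr (_ / _); ring.
    have n1 : P (t z) = p z by apply: P_node; rewrite z1 ltnW.
    have n2 : P (t z.+1) = p z.+1 by apply: P_node; rewrite zm.
    by rewrite e2 n1 n2.
  - have c3 := frechet_closeW_sym (bnd_seg _ _) (bnd_sub (leq_trans z1 (leqnSn z)) hy1 ym) (yz_good hz hy).
    apply: closeW_ext c3 => s Is.
      rewrite /A /subcurve; congr (P _); rewrite /a2; field; exact: hd.
    rewrite seg_val // /pi4 (_ : (2 + s) / 3 = (3%:R - 1 + s) / 3); last first.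
      by congr (_ / _); ring.
    by rewrite pi4_val.
have hpi : closeW (pi4 m t p x z z.+1 y) (tau m t p i j) (2 * Delta).
  apply: frechet_closeW => //; [exact: bnd_polyu4 | exact: bnd_seg].
have htr := closeW_trans hglue hpi.
have L0 : 0 <= Lc m t p * (t y - t x) by rewrite mulr_ge0 // ?Lc_ge0 // ltW.
apply: (closeW_frechet (bnd_sub x1 (ltnW xy) ym) (bnd_seg _ _) L0 (lip_sub x1 (ltnW xy) ym)).
apply: closeW_le htr; lra.
Qed.

End Main.
End M.


Lemma bigmin_seq_le (R : realType) (T : choiceType) (C : {fset T}) (F : T -> \bar R) q :
  q \in C -> (\big[Order.min/+oo%E]_(q' <- C) F q' <= F q)%E.
Proof.
move=> qC; rewrite (bigD1_seq q) //=.
by rewrite minEle; case: ifP => // /negbT; rewrite -ltNge => /ltW.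
Qed.

Unset Implicit Arguments.
Set Strict Implicit.

Theorem mainTheorem5 (R : realType) (d m : nat) (t : nat -> R) (p : nat -> pt R d)
    (Delta : R) :
  0 < Delta ->
  (2 <= m)%N -> t 1%N = 0 -> t m = 1 ->
  (forall i : nat, (1 <= i < m)%N -> t i < t i.+1) ->
  R_has_set_cover m t p Delta ->
  forall (S : {fset nat * nat}) (k : nat),
    (forall ij, ij \in S -> (1 <= ij.1 <= ij.2)%N /\ (ij.2 <= m)%N) ->
    \bigcup_(ij in [set ij | ij \in S]) rhat m t p Delta ij.1 ij.2 = Zg m ->
    #|` S|%fset = k ->
    let C := [fset (Pc m t p (t ij.1), Pc m t p (t ij.2)) | ij in S]%fset in
    (#|` C|%fset <= k)%N /\ (phi m t p C <= (6 * Delta)%:E)%E.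
Proof.
move=> Dp m2 t1 tm tinc _ S k HS Hcov Hk C; split.
  by rewrite -Hk; exact: leq_imfset_card.
have cz : forall z : nat, exists u : (nat * nat) * (nat * nat),
    Zg m z -> [/\ u.1 \in S, (xz m t p Delta z <= u.2.1 <= z)%N,
                 (z.+1 <= u.2.2 <= yz m t p Delta z)%N &
                 frechet (pi4 m t p u.2.1 z z.+1 u.2.2) (tau m t p u.1.1 u.1.2) <= 2 * Delta].
  move=> z; case: (pselect (Zg m z)) => hz; last by exists ((0, 0), (0, 0))%N.
  move: hz; rewrite -Hcov => -[ij /= ijS [hz [x [y [hx [hy hf]]]]]].
  by exists (ij, (x, y)).
have [F HF] := choice cz.
have core6 : forall z, Zg m z ->
  frechet (subcurve (Pc m t p) (t (F z).2.1) (t (F z).2.2)) (tau m t p (F z).1.1 (F z).1.2) <= 6 * Delta.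
  move=> z hz; have [h1 h2 h3 h4] := HF z hz.
  have [h5 h6] := HS _ h1.
  by apply: (core Dp m2 tinc hz h5 h6 h2 h3 h4).
pose X z := (F z).2.1; pose Y z := (F z).2.2.
have XY : forall z, Zg m z -> [/\ (1 <= X z)%N, (X z <= z)%N, (z < Y z)%N & (Y z <= m)%N].
  move=> z hz; have [_ h2 h3 _] := HF z hz; have /andP[z1 zm] := hz.
  have /andP[a1 a2] := xz_ge1 m t p Delta z1; have /andP[b1 b2] := yz_le t p Delta zm.
  have /andP[c1 c2] := h2; have /andP[e1 e2] := h3.
  split; [exact: leq_trans a1 c1 | exact: c2 | exact: e1 | exact: leq_trans e2 b2].
pose I : {set 'I_m.+1 * 'I_m.+1} :=
  imset (fun z : 'I_m => ((inord (X z) : 'I_m.+1), (inord (Y z) : 'I_m.+1)))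
    (mem [pred z : 'I_m | (0 < val z)%N]).
have memI : forall ij, ij \in I -> exists z : 'I_m, [/\ Zg m z, val ij.1 = X z & val ij.2 = Y z].
  move=> ij /imsetP [z hz ->]; exists z.
  have zZ : Zg m z by move: hz; rewrite inE /Zg /= => ->; rewrite ltn_ord.
  have [h1 h2 h3 h4] := XY z zZ.
  split => //=; apply: inordK; rewrite ltnS //.
  by apply: leq_trans h2 (ltnW (ltn_ord z)).
have vI : validI t I.
  split.
    move=> ij /memI [z [zZ -> ->]]; have [h1 h2 h3 h4] := XY z zZ.
    by rewrite h1 (leq_ltn_trans h2 h3).
  move=> x; split.
    case=> ij /memI [z [zZ e1 e2]] /andP[]; rewrite e1 e2 => h1 h2.
    have [a1 a2 a3 a4] := XY z zZ.
    have l1 : t 1%N <= t (X z) by apply: (t_le tinc) => //; apply: leq_trans a2 (ltnW (ltn_ord z)).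
    have l2 : t (Y z) <= t m by apply: (t_le tinc) => //; apply: leq_trans (ltn0Sn z) a3.
    rewrite /I01 /=; apply/andP; split; lra.
  move=> /andP[x0 x1].
  have hx1 : t 1%N <= x by rewrite t1.
  have hxm : x <= t m by rewrite tm.
  have [/andP[j1 j2] hj1 hj2] := @idx_spec R m t m2 x hx1 hxm.
  set j := idx m t x in j1 j2 hj1 hj2.
  have jZ : Zg m j by rewrite /Zg /= j1 j2.
  have [a1 a2 a3 a4] := XY j jZ.
  exists ((inord (X j) : 'I_m.+1), (inord (Y j) : 'I_m.+1)).
    apply/imsetP; exists (Ordinal j2) => //=.
  rewrite /= !inordK ?ltnS //; last by apply: leq_trans a2 (ltnW j2).
  have l1 : t (X j) <= t j by apply: (t_le tinc) => //; exact: ltnW.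
  have l2 : t j.+1 <= t (Y j) by apply: (t_le tinc).
  apply/andP; split; lra.
rewrite /phi.
apply: le_trans (bigmin_le_cond _ (P := fun I => `[< validI t I >]) (j := I) _ _) _.
  exact/asboolP.
apply: bigmax_le => [|ij hij]; first exact: leNye.
have [z [zZ e1 e2]] := memI ij hij.
have [h1 _ _ _] := HF z zZ.
apply: le_trans (bigmin_seq_le _ (q := (Pc m t p (t (F z).1.1), Pc m t p (t (F z).1.2))) _) _.
  by apply/imfsetP; exists (F z).1.
rewrite /= lee_fin e1 e2; exact: core6.
Qed.
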